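(* For any $0<r<\log 1.01$ and any $s\in\mathbb{R}$ with $6r\le|s|\le\log 1.9$, we have $a_sK_r\cap K_r=\varnothing$.
   Context: $X=\mathrm{SL}_2(\mathbb{R})/\mathrm{SL}_2(\mathbb{Z})$ is the space of unimodular lattices in $\mathbb{R}^2$. $\|\cdot\|$ is the supremum norm on $\mathbb{R}^2$. For $\Lambda\in X$ let $\Delta(\Lambda)=\sup_{v\in\Lambda\smallsetminus\{0\}}\log(1/\|v\|)$, and for $r\ge0$ let $K_r=\Delta^{-1}([0,r])$. $a_s=\mathrm{diag}(e^s,e^{-s})$ acts on $X$ by left multiplication. *)

(* Defs.v *)
From HB Require Import structures.
From mathcomp Require Import all_boot all_order all_algebra.
From mathcomp Require Import all_classical all_reals all_analysis.
Set Implicit Arguments. Unset Strict Implicit. Unset Printing Implicit Defensive.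
Import Order.TTheory GRing.Theory Num.Theory.
Local Open Scope classical_set_scope.
Local Open Scope ring_scope.

Section Lattices.
Variable R : realType.

Definition vec2 (x y : R) : 'cV[R]_2 :=
  \col_(i < 2) (if i == ord0 then x else y).

Definition supnorm (v : 'cV[R]_2) : R :=
  Num.max `|v ord0 ord0| `|v (lift ord0 ord0) ord0|.

Definition lattice_of (g : 'M[R]_2) : set 'cV[R]_2 :=
  [set g *m vec2 m%:~R n%:~R | m in [set: int] & n in [set: int]].

(* X = SL_2(R)/SL_2(Z): the unimodular lattices g Z^2 with det g = 1 *)
Definition X : set (set 'cV[R]_2) :=
  [set L | exists g : 'M[R]_2, \det g = 1 /\ L = lattice_of g].

Definition Delta (L : set 'cV[R]_2) : \bar R :=
  ereal_sup [set (ln (1 / supnorm v))%:E | v in L `\ 0].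

Definition K (r : R) : set (set 'cV[R]_2) :=
  [set L | X L /\ (0 <= Delta L)%E /\ (Delta L <= r%:E)%E].

Definition a_ (s : R) : 'M[R]_2 :=
  \matrix_(i < 2, j < 2)
    (if i == j then (if i == ord0 then expR s else expR (- s)) else 0).

Definition act (h : 'M[R]_2) (L : set 'cV[R]_2) : set 'cV[R]_2 :=
  [set h *m v | v in L].

End Lattices.

(* Main.v *)
Require Import Defs.
From HB Require Import structures.
From mathcomp Require Import all_boot all_order all_algebra.
From mathcomp Require Import all_classical all_reals all_analysis.
From mathcomp Require Import ring lra.
Import Order.TTheory GRing.Theory Num.Theory.
Local Open Scope classical_set_scope.
Local Open Scope ring_scope.

Lemma numfacts (R : realType) (d E : R) : 100/101 < d -> d < 1 -> 1 <= E * d^+6 -> E <= 19/10 ->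
  [/\ 0 < d, 0 < E, 1 < d^+2 * E, E < 2 * d^+2 & (d^+6 - 2 * d^+2 + 1 < 0 /\ (2 - d^+2) * d^+4 < 1)].
Proof.
move=> h1 h2 h3 h4.
have d0 : 0 < d by lra.
set u := d^+2.
have u0 : 10000/10201 < u by rewrite /u; nra.
have u1 : u < 1 by rewrite /u; nra.
have e6 : d^+6 = u^+3 by rewrite /u -exprM.
have e4 : d^+4 = u^+2 by rewrite /u -exprM.
rewrite e6 e4 in h3 *.
have u3 : u^+3 < u by rewrite !exprS expr0; nra.
have E0 : 0 < E by nra.
split => //.
- nra.
- lra.
- rewrite !exprS expr0 mulr1; split.
  + have hp : 0 < u*u + u - 1 by nra.
    have : 0 < (1-u)*(u*u+u-1) by apply mulr_gt0; lra.
    lra.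
  + have hp : 0 < 1 + u - u*u by nra.
    have : 0 < (1-u)*(1 + u - u*u) by apply mulr_gt0; lra.
    lra.
Qed.

Lemma divE_le (R : realType) (d E a : R) : 0 < E -> d <= `|a / E| -> d * E <= `|a|.
Proof. by move=> E0; rewrite normrM normfV (gtr0_norm E0) ler_pdivlMr. Qed.

Lemma mulE_le (R : realType) (d E a : R) : 0 < E -> d <= `|E * a| -> d <= E * `|a|.
Proof. by move=> E0; rewrite normrM (gtr0_norm E0). Qed.


Lemma caseII (R : realType) (d E p q x y : R) :
  0 < d -> 0 < E -> E < 2 * d^+2 -> (2 - d^+2) * d^+4 < 1 -> 1 <= E * d^+6 ->
  1 < E * d^+4 -> d^+2 < 1 ->
  0 < p -> 0 <= q -> p*d <= 1 -> q*d <= 1 -> 0 <= x -> x < p -> p*y - q*x = 1 ->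
  q < d * E -> d <= E * p -> (d <= p \/ d <= q) -> d <= E * (p - x) -> E * x < d ->
  d * E <= y -> (d <= `|x-p| \/ d <= `|y-q|) -> False.
Proof.
move=> d0 E0 E2 D4 h3 Ed4 d2 p0 q0 pd qd x0 xp det qdE Ep hv hII Ex hy hNz'.
have xpp : 0 < p - x by lra.
have ex1 : p * (y - q) = 1 - q * (p - x) by lra.
have d4 : 0 <= d^+4 by rewrite exprn_ge0 //; lra.
have dd : 0 <= d^+2 by rewrite exprn_ge0 //; lra.
have hyq : p - x < d -> d <= y - q.
  move=> hp.
  case: hNz' => h.
  - move: h; rewrite distrC (gtr0_norm xpp) => h; lra.
  - move: h; rewrite ler_normr => /orP[h|h] //.
    have : 0 <= d * E by apply mulr_ge0; lra.
    lra.
have [pged|pltd] := lerP d p.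
  have pyge : d^+2 * E <= p * y.
    have f1 : 0 <= p * (y - d * E) by apply mulr_ge0; lra.
    have f2 : 0 <= (p - d) * (d * E) by apply mulr_ge0; [lra|apply mulr_ge0; lra].
    rewrite expr2; lra.
  have [hpx|hpx] := lerP d (p - x).
  - have f1 : 0 <= d * ((1 - q * d) * x) by apply mulr_ge0; [lra|apply mulr_ge0; lra].
    have f2 : 0 <= d * ((p - d) - x) by apply mulr_ge0; lra.
    have f3 : d^+2 * (p * y) <= 1.
      have -> : p * y = 1 + q * x by lra.
      rewrite expr2; lra.
    have f4 : 0 <= d^+2 * (p * y - d^+2 * E) by apply mulr_ge0; lra.
    have : d^+2 * (d^+2 * E) = E * d^+4 by rewrite mulrA -exprD mulrC.
    lra.
  - have hq := hyq hpx.
    have f1 : 0 <= p * (y - q - d) by apply mulr_ge0; lra.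
    have f1' : 0 <= (p - d) * d by apply mulr_ge0; lra.
    have f2 : 0 <= q * (E * (p - x) - d) by apply mulr_ge0; lra.
    have f3 : 0 <= q * (d - E * x) by apply mulr_ge0; lra.
    have f3' : 0 <= E * (1 - d^+2 - q * (p - x)) by apply mulr_ge0; rewrite ?expr2; lra.
    have f4 : q * x <= 1 - d^+2.
      have : E * (q * x) <= E * (1 - d^+2) by rewrite expr2; lra.
      by rewrite ler_pM2l.
    have f5 : 0 <= d^+4 * (2 - d^+2 - d^+2 * E) by apply mulr_ge0; lra.
    have : d^+4 * (d^+2 * E) = E * d^+6 by rewrite mulrA -exprD mulrC.
    lra.
have qged : d <= q by case: hv => //; lra.
have hq : d <= y - q by apply: hyq; lra.
have f1 : 0 <= q * (E * (p - x) - d) by apply mulr_ge0; lra.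
have f2 : 0 <= (q - d) * d by apply mulr_ge0; lra.
have f3 : 0 <= E * p * (y - q - d) by apply mulr_ge0; [apply mulr_ge0|]; lra.
have f4 : 0 <= (E * p - d) * d by apply mulr_ge0; lra.
have : E * (p * (y - q)) + E * (q * (p - x)) = E by rewrite -mulrDr ex1; ring.
rewrite expr2 in E2; lra.
Qed.
Lemma core (R : realType) (d E p q x y : R) : 100/101 < d -> d < 1 -> 1 <= E * d^+6 -> E <= 19/10 ->
 0 < p -> 0 <= q -> p*d <= 1 -> q*d <= 1 -> 0 <= x -> x < p -> p*y - q*x = 1 ->
 (d <= `|p| \/ d <= `|q|) ->
 (d <= `|E * p| \/ d <= `|q/E|) ->
 (d <= `|E * x| \/ d <= `|y/E|) ->
 (d <= `|E * (x-p)| \/ d <= `|(y-q)/E|) ->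
 (d <= `|x-p| \/ d <= `|y-q|) ->
 (d <= `|2 * p - x| \/ d <= `|2 * q - y|) -> False.
Proof.
move=> h1 h2 h3 h4 p0 q0 pd qd x0 xp det hNv hAv hAz hAz' hNz' hN2.
have [d0 E0 dE1 E2 [D3 D4]] := numfacts _ _ _ h1 h2 h3 h4.
have d2 : d^+2 < 1 by clear -d0 h2; nra.
have d4 : 0 < d^+4 by rewrite exprn_gt0.
have d6 : d^+6 < d^+4.
  have -> : d^+6 = d^+4 * d^+2 by rewrite -exprD.
  by clear -d2 d4; nra.
have Ed4 : 1 < E * d^+4 by clear -E0 d6 h3; nra.
have y0 : 0 < y.
  have : 0 <= q * x by apply mulr_ge0.
  by clear -det p0 x0 q0; nra.
have ex1 : p * (y - q) = 1 - q * (p - x) by lra.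
have qdE : q < d * E by clear -qd dE1 d0; nra.
have Ep : d <= E * p.
  case: hAv => h.
  - by move/(mulE_le _ _ _ _ E0): h; rewrite (gtr0_norm p0).
  - move/(divE_le _ _ _ _ E0): h; rewrite (ger0_norm q0) => h; lra.
have hv : d <= p \/ d <= q by case: hNv; rewrite ?(gtr0_norm p0) ?(ger0_norm q0); auto.
have xpp : 0 < p - x by lra.
have [hI|hII] := ltrP (E * (p - x)) d.
-
  have hyq : d * E <= y - q.
    case: hAz' => h.
    + move/(mulE_le _ _ _ _ E0): h; rewrite distrC (gtr0_norm xpp) => h; lra.
    + move/(divE_le _ _ _ _ E0): h; rewrite ler_normr => /orP[h|h] //; lra.
  have qpx : 0 <= q * (p - x) by apply mulr_ge0; lra.
  have pyq : d * E * p <= p * (y - q) by rewrite mulrC; apply ler_wpM2l; lra.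
  have pdE : d * E * p <= 1 by lra.
  have pltd : p < d.
    have : d * (d * E * p) <= d by rewrite -[X in _ <= X]mulr1; apply ler_wpM2l; lra.
    by clear -dE1 p0 d0; nra.
  have qged : d <= q by case: hv => //; lra.
  have hpx : d * (p - x) <= 1 - d^+2.
    have : d * (p - x) <= q * (p - x) by apply ler_wpM2r; lra.
    have : d * d <= d * (E * p) by apply ler_wpM2l; lra.
    rewrite expr2; lra.
  have dp6 : d * p <= d^+6.
    have : 0 <= (d * p) * (E * d^+6 - 1) by apply mulr_ge0; [apply mulr_ge0|]; lra.
    have : 0 <= d^+6 * (1 - d * E * p) by apply mulr_ge0; [rewrite exprn_ge0 //; lra|lra].
    lra.
  case: hN2; rewrite ler_normr => /orP[h|h].
  + have : d * (2 * p - x) < d * d.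
      have -> : d * (2 * p - x) = d * p + d * (p - x) by ring.
      rewrite -expr2; lra.
    rewrite ltr_pM2l //; lra.
  + lra.
  + lra.
  + have hh : d * (y - q) <= E.
      have : d * (y - q) <= E * p * (y - q) by apply ler_wpM2r; lra.
      have : E * (p * (y - q)) <= E * 1 by apply ler_wpM2l; lra.
      lra.
    have : d * (- (2 * q - y)) < d * d.
      have -> : d * (- (2 * q - y)) = d * (y - q) - d * q by ring.
      have : d * d <= d * q by apply ler_wpM2l; lra.
      rewrite expr2 in E2; lra.
    rewrite ltr_pM2l //; lra.
-
  have Ex : E * x < d.
    have Epd : E * p * d <= E by rewrite -mulrA -[X in _ <= X]mulr1; apply ler_wpM2l; lra.
    have : E * p < 2 * d.
      have : E * p * d < 2 * d * d by rewrite expr2 in E2; lra.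
      by rewrite ltr_pM2r.
    lra.
  have hy : d * E <= y.
    case: hAz => h.
    + move/(mulE_le _ _ _ _ E0): h; rewrite (ger0_norm x0) => h; lra.
    + by move/(divE_le _ _ _ _ E0): h; rewrite (gtr0_norm y0).
  exact: (caseII _ _ _ _ _ _ _ d0 E0 E2 D4 h3 Ed4 d2 p0 q0 pd qd x0 xp det qdE Ep hv hII Ex hy hNz').
Qed.

Definition goodE (R : realType) (d E x y : R) :=
  (d <= `|x| \/ d <= `|y|) /\ (d <= `|E * x| \/ d <= `|y / E|).
Arguments goodE {R} d E x y.
Definition HypL (R : realType) (d E p q a b : R) := forall m n : int, (m != 0) || (n != 0) ->
  goodE d E (m%:~R * p + n%:~R * a) (m%:~R * q + n%:~R * b).
Arguments HypL {R} d E p q a b.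

Lemma lemP0 (R : realType) (d E p q a b : R) : 100/101 < d -> d < 1 -> 1 <= E * d^+6 -> E <= 19/10 ->
  0 < p -> 0 <= q -> p*d <= 1 -> q*d <= 1 -> p*b - q*a = 1 -> HypL d E p q a b -> False.
Proof.
move=> h1 h2 h3 h4 p0 q0 pd qd det H.
set f := Num.floor (a / p).
have /andP[fl1 fl2] := floor_itv (a / p).
rewrite -/f in fl1 fl2.
rewrite ler_pdivlMr // in fl1.
rewrite ltr_pdivrMr // intrD mulrDl mul1r in fl2.
set x := a - f%:~R * p. set y := b - f%:~R * q.
have x0 : 0 <= x by rewrite /x; lra.
have xp : x < p by rewrite /x; lra.
have detxy : p * y - q * x = 1 by rewrite /x /y -det; ring.
have [hNv hAv] : goodE d E p q.
  by have := H 1 0 isT; rewrite !mul1r !mul0r !addr0.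
have [hNz hAz] : goodE d E x y.
  have := H (- f) 1 (orbT _); rewrite !mul1r intrN !mulNr.
  by rewrite /x /y ![_ + a]addrC ![_ + b]addrC.
have [hNz' hAz'] : goodE d E (x - p) (y - q).
  have := H (- f - 1) 1 (orbT _).
  have -> : ((- f - 1)%:~R * p + 1%:~R * a) = x - p by rewrite /x intrB intrN mul1r; ring.
  by have -> : ((- f - 1)%:~R * q + 1%:~R * b) = y - q by rewrite /x /y intrB intrN mul1r; ring.
have [hN2 hA2] : goodE d E (2 * p - x) (2 * q - y).
  have := H (2 + f) (-1) (orbT _).
  have -> : ((2 + f)%:~R * p + (-1)%:~R * a) = 2 * p - x by rewrite /x !intrD mulrN1z; ring.
  by have -> : ((2 + f)%:~R * q + (-1)%:~R * b) = 2 * q - y by rewrite /y !intrD mulrN1z; ring.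
exact: (core _ _ _ _ _ _ _ h1 h2 h3 h4 p0 q0 pd qd x0 xp detxy hNv hAv hAz hAz' hNz' hN2).
Qed.

Lemma goodE_negx (R : realType) (d E x y : R) : goodE d E x y -> goodE d E (- x) y.
Proof. by rewrite /goodE mulrN !normrN. Qed.
Lemma goodE_negy (R : realType) (d E x y : R) : goodE d E x y -> goodE d E x (- y).
Proof. by rewrite /goodE mulNr !normrN. Qed.

Lemma lemP (R : realType) (d E p q a b : R) : 100/101 < d -> d < 1 -> 1 <= E * d^+6 -> E <= 19/10 ->
  `|p| * d <= 1 -> `|q| * d <= 1 -> p*b - q*a = 1 -> HypL d E p q a b -> False.
Proof.
move=> h1 h2 h3 h4 pd qd det H.
have [d0 E0 dE1 _ _] := numfacts _ _ _ h1 h2 h3 h4.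
have pn0 : p != 0.
  apply/negP => /eqP p0.
  have [_ hA] := H 1 0 isT; move: hA; rewrite !mul1r !mul0r !addr0 p0 mulr0 normr0.
  case=> [|h]; first lra.
  have := divE_le _ _ _ _ E0 h => h'.
  have : d * E * d <= `|q| * d by apply ler_wpM2r; lra.
  rewrite expr2 in dE1; lra.
have Hneg : forall m n : int, (m != 0) || (n != 0) -> (m != 0) || (- n != 0).
  by move=> m n; rewrite oppr_eq0.
have [pp|pn] : 0 < p \/ p < 0 by move: pn0; rewrite neq_lt => /orP[]; [right|left].
- have [qp|qn] := lerP 0 q.
  + rewrite (gtr0_norm pp) in pd; rewrite (ger0_norm qp) in qd.
    exact: (lemP0 _ _ _ _ _ _ _ h1 h2 h3 h4 pp qp pd qd det H).
  + apply: (lemP0 _ d E p (- q) (- a) b h1 h2 h3 h4 pp) => //.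
    * lra.
    * by rewrite (gtr0_norm pp) in pd.
    * by rewrite (ltr0_norm qn) in qd.
    * by rewrite -det; ring.
    * move=> m n mn; have := H m (- n) (Hneg _ _ mn).
      have -> : m%:~R * p + (- n)%:~R * a = m%:~R * p + n%:~R * (- a) by rewrite intrN; ring.
      have -> : m%:~R * q + (- n)%:~R * b = - (m%:~R * (- q) + n%:~R * b) by rewrite intrN; ring.
      by move/goodE_negy; rewrite opprK.
- have [qp|qn] := lerP 0 q.
  + apply: (lemP0 _ d E (- p) q a (- b) h1 h2 h3 h4) => //.
    * lra.
    * by rewrite (ltr0_norm pn) in pd.
    * by rewrite (ger0_norm qp) in qd.
    * by rewrite -det; ring.
    * move=> m n mn; have := H m (- n) (Hneg _ _ mn).
      have -> : m%:~R * p + (- n)%:~R * a = - (m%:~R * (- p) + n%:~R * a) by rewrite intrN; ring.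
      have -> : m%:~R * q + (- n)%:~R * b = m%:~R * q + n%:~R * (- b) by rewrite intrN; ring.
      by move/goodE_negx; rewrite opprK.
  + apply: (lemP0 _ d E (- p) (- q) (- a) (- b) h1 h2 h3 h4) => //.
    * lra.
    * lra.
    * by rewrite (ltr0_norm pn) in pd.
    * by rewrite (ltr0_norm qn) in qd.
    * by rewrite -det; ring.
    * move=> m n mn; have := H m n mn.
      have -> : m%:~R * p + n%:~R * a = - (m%:~R * (- p) + n%:~R * (- a)) by ring.
      have -> : m%:~R * q + n%:~R * b = - (m%:~R * (- q) + n%:~R * (- b)) by ring.
      by move/goodE_negx/goodE_negy; rewrite !opprK.
Qed.

Lemma int_norm_ge1 (R : realType) (z : int) : z != 0 -> 1 <= `|z%:~R : R|.
Proof.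
move=> hz; rewrite -intr_norm ler1z.
by rewrite -gtz0_ge1 normr_gt0.
Qed.

Lemma latt (R : realType) (d E g00 g01 g10 g11 : R) :
  100/101 < d -> d < 1 -> 1 <= E * d^+6 -> E <= 19/10 -> g00 * g11 - g01 * g10 = 1 ->
  (forall i j : int, (i != 0) || (j != 0) ->
     goodE d E (g00 * i%:~R + g01 * j%:~R) (g10 * i%:~R + g11 * j%:~R)) ->
  forall i0 j0 : int, (i0 != 0) || (j0 != 0) ->
  `|g00 * i0%:~R + g01 * j0%:~R| * d <= 1 -> `|g10 * i0%:~R + g11 * j0%:~R| * d <= 1 -> False.
Proof.
move=> h1 h2 h3 h4 dg H i0 j0 nz s1 s2.
have d0 : 0 < d by lra.
set g0 := gcdz i0 j0.
have g0n : g0 != 0 by rewrite /g0 gcdz_eq0 negb_and.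
have ei : i0 = (i0 %/ g0)%Z * g0 by rewrite divzK // dvdz_gcdl.
have ej : j0 = (j0 %/ g0)%Z * g0 by rewrite divzK // dvdz_gcdr.
case: (Bezoutz i0 j0) => u [v huv].
set i1 := (i0 %/ g0)%Z in ei; set j1 := (j0 %/ g0)%Z in ej.
have bez : u * i1 + v * j1 = 1.
  have h : u * (i1 * g0) + v * (j1 * g0) = g0 by rewrite -ei -ej huv.
  by apply: (mulIf g0n); rewrite mul1r -[in RHS]h; ring.
set p := g00 * i1%:~R + g01 * j1%:~R.
set q := g10 * i1%:~R + g11 * j1%:~R.
set a := g00 * (- v)%:~R + g01 * u%:~R.
set b := g10 * (- v)%:~R + g11 * u%:~R.
have g1 := @int_norm_ge1 R g0 g0n.
have ep : g00 * i0%:~R + g01 * j0%:~R = g0%:~R * p by rewrite /p ei ej !intrM; ring.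
have eq : g10 * i0%:~R + g11 * j0%:~R = g0%:~R * q by rewrite /q ei ej !intrM; ring.
apply: (lemP _ d E p q a b h1 h2 h3 h4).
- move: s1; rewrite ep normrM => s1.
  have : `|p| * d <= `|g0%:~R| * `|p| * d.
    by apply ler_wpM2r; [lra|]; rewrite -[X in X <= _]mul1r; apply ler_wpM2r.
  lra.
- move: s2; rewrite eq normrM => s2.
  have : `|q| * d <= `|g0%:~R| * `|q| * d.
    by apply ler_wpM2r; [lra|]; rewrite -[X in X <= _]mul1r; apply ler_wpM2r.
  lra.
- have bez' : u%:~R * i1%:~R + v%:~R * j1%:~R = 1 :> R by rewrite -!intrM -intrD bez.
  have -> : p * b - q * a = (g00 * g11 - g01 * g10) * (u%:~R * i1%:~R + v%:~R * j1%:~R).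
    by rewrite /p /q /a /b intrN; ring.
  by rewrite dg bez' mulr1.
- move=> m n mn.
  have nz' : (m * i1 + n * (- v) != 0) || (m * j1 + n * u != 0).
    move: mn; apply: contraLR; rewrite !negb_or !negbK => /andP[/eqP e1 /eqP e2].
    apply/andP; split; apply/eqP.
    + have -> : m = u * (m * i1 + n * (- v)) + v * (m * j1 + n * u) by rewrite -[m in LHS]mulr1 -bez; ring.
      by rewrite e1 e2; ring.
    + have -> : n = i1 * (m * j1 + n * u) - j1 * (m * i1 + n * (- v)) by rewrite -[n in LHS]mulr1 -bez; ring.
      by rewrite e1 e2; ring.
  have := H _ _ nz'.
  have -> : g00 * (m * i1 + n * - v)%:~R + g01 * (m * j1 + n * u)%:~R = m%:~R * p + n%:~R * a.
    by rewrite /p /a !intrD !intrM; ring.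
  by have -> : g10 * (m * i1 + n * - v)%:~R + g11 * (m * j1 + n * u)%:~R = m%:~R * q + n%:~R * b
    by rewrite /q /b !intrD !intrM; ring.
Qed.

Lemma latt_sw (R : realType) (d E g00 g01 g10 g11 : R) :
  100/101 < d -> d < 1 -> 1 <= E * d^+6 -> E <= 19/10 -> g00 * g11 - g01 * g10 = 1 ->
  (forall i j : int, (i != 0) || (j != 0) ->
     goodE d E (g10 * i%:~R + g11 * j%:~R) (g00 * i%:~R + g01 * j%:~R)) ->
  forall i0 j0 : int, (i0 != 0) || (j0 != 0) ->
  `|g00 * i0%:~R + g01 * j0%:~R| * d <= 1 -> `|g10 * i0%:~R + g11 * j0%:~R| * d <= 1 -> False.
Proof.
move=> h1 h2 h3 h4 dg H i0 j0 nz s1 s2.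
apply: (latt _ d E g10 (- g11) g00 (- g01) h1 h2 h3 h4 _ _ i0 (- j0)).
- by rewrite -dg; ring.
- move=> i j ij; have := H i (- j); rewrite oppr_eq0 => /(_ ij).
  by rewrite intrN !mulrN !mulNr.
- by rewrite oppr_eq0.
- by rewrite intrN mulrNN.
- by rewrite intrN mulrNN.
Qed.

Notation i1 := (lift ord0 ord0).
Lemma det22 (R : realType) (g : 'M[R]_2) : \det g = g ord0 ord0 * g i1 i1 - g ord0 i1 * g i1 ord0.
Proof.
rewrite (expand_det_row _ ord0) !big_ord_recl big_ord0 /cofactor !det_mx11 !mxE /=.
have e1 : lift ord0 (0 : 'I_1) = i1 by apply: val_inj.
have e2 : lift i1 (0 : 'I_1) = ord0 by apply: val_inj.
rewrite e1 e2 /bump /= expr0 expr1; ring.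
Qed.
Lemma vec2_coord (R : realType) (g : 'M[R]_2) (x y : R) :
  (g *m vec2 x y) ord0 ord0 = g ord0 ord0 * x + g ord0 i1 * y /\
  (g *m vec2 x y) i1 ord0 = g i1 ord0 * x + g i1 i1 * y.
Proof.
by split; rewrite !mxE !big_ord_recl !big_ord0 !mxE /= addr0.
Qed.
Lemma a_coord (R : realType) (s : R) (w : 'cV[R]_2) :
  (a_ s *m w) ord0 ord0 = expR s * w ord0 ord0 /\
  (a_ s *m w) i1 ord0 = expR (- s) * w i1 ord0.
Proof.
split; rewrite !mxE !big_ord_recl !big_ord0 !mxE /=; ring.
Qed.
Lemma cV2_eq0 (R : realType) (w : 'cV[R]_2) : w ord0 ord0 = 0 -> w i1 ord0 = 0 -> w = 0.
Proof.
move=> h0 h1; apply/matrixP => i j; rewrite (ord1 j) mxE.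
case: i => [[|[|k]]] //= Hi.
- by rewrite -h0; congr (w _ _); apply: val_inj.
- by rewrite -h1; congr (w _ _); apply: val_inj.
Qed.
Lemma supnorm_gt0 (R : realType) (w : 'cV[R]_2) : w != 0 -> 0 < supnorm w.
Proof.
move=> wn; rewrite /supnorm lt_max !normr_gt0.
apply: contraNT wn; rewrite negb_or !negbK => /andP[/eqP h0 /eqP h1].
by apply/eqP; apply: cV2_eq0.
Qed.
Lemma Delta_le_inv (R : realType) (L : set 'cV[R]_2) (r : R) (w : 'cV[R]_2) :
  (Delta L <= r%:E)%E -> L w -> w != 0 -> expR (- r) <= supnorm w.
Proof.
move=> /ereal_supP Dr Lw wn.
have n0 := @supnorm_gt0 _ _ wn.
have := Dr _ (ex_intro2 _ _ w (conj Lw (fun h => (negP wn) (introT eqP h))) erefl).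
rewrite lee_fin div1r lnV ?posrE // => h.
by rewrite -(lnK (x:=supnorm w)) ?posrE // ler_expR; lra.
Qed.
Lemma Delta_ge0_short (R : realType) (L : set 'cV[R]_2) (r : R) : 0 < r ->
  (0 <= Delta L)%E -> exists w, L w /\ w != 0 /\ supnorm w * expR (- r) < 1.
Proof.
move=> r0 D0.
have : ((- r)%:E < Delta L)%E by apply: lt_le_trans D0; rewrite lte_fin; lra.
move/ereal_sup_gt => [y [w [Lw wn] <-]].
have wn' : w != 0 by apply/eqP.
have n0 := @supnorm_gt0 _ _ wn'.
rewrite lte_fin div1r lnV ?posrE // => h.
exists w; split => //; split => //.
have : supnorm w < expR r by rewrite -(lnK (x:=supnorm w)) ?posrE // ltr_expR; lra.
move=> h'; rewrite expRN.
by rewrite ltr_pdivrMr ?expR_gt0 // mul1r.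
Qed.

Lemma le_supnorm (R : realType) (d : R) (w : 'cV[R]_2) :
  d <= supnorm w -> d <= `|w ord0 ord0| \/ d <= `|w i1 ord0|.
Proof. by rewrite /supnorm le_max => /orP. Qed.

Theorem lemma3p2 (R : realType) (r s : R) :
  0 < r -> r < ln (101 / 100 : R) ->
  6 * r <= `|s| -> `|s| <= ln (19 / 10 : R) ->
  [set act (a_ s) L | L in K r] `&` K r = set0.
Proof.
move=> r0 rln hs6 hs19.
rewrite -subset0 => L' [[L0 [[g [dg eL]] [D0 Dr]] <-] [_ [_ Dr']]].
subst L0.
set d := expR (- r).
have h1 : 100/101 < d.
  have e : expR (- ln (101/100 : R)) = 100/101 by rewrite expRN lnK ?posrE // invf_div.
  by rewrite -e /d ltr_expR; lra.
have h2 : d < 1 by rewrite /d -expR0 ltr_expR; lra.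
set E := expR `|s|.
have h3 : 1 <= E * d^+6.
  rewrite /E /d -expRM_natl -expRD -[X in X <= _]expR0 ler_expR; lra.
have h4 : E <= 19/10.
  by rewrite /E -(lnK (x:=19/10)) ?posrE // ler_expR.
set g00 := g ord0 ord0; set g01 := g ord0 i1; set g10 := g i1 ord0; set g11 := g i1 i1.
have dg' : g00 * g11 - g01 * g10 = 1 by rewrite -dg det22.
have z0 : forall i j, (0 : 'cV[R]_2) i j = 0 by move=> ? ?; rewrite mxE.
have Hlat : forall i j : int, lattice_of g (g *m vec2 i%:~R j%:~R) by move=> i j; exists i => //; exists j.
have nz : forall i j : int, (i != 0) || (j != 0) -> g *m vec2 i%:~R j%:~R != 0.
  move=> i j ij; apply: contraTneq ij => w0.
  have [c0 c1] := vec2_coord _ g i%:~R j%:~R; rewrite w0 !z0 -/g00 -/g01 -/g10 -/g11 in c0 c1.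
  rewrite negb_or !negbK; apply/andP; split; rewrite -(intr_eq0 R); apply/eqP.
  - have e : g11 * (g00 * i%:~R + g01 * j%:~R) - g01 * (g10 * i%:~R + g11 * j%:~R) = (g00 * g11 - g01 * g10) * i%:~R by ring.
    by rewrite dg' mul1r -c0 -c1 in e; rewrite -e; ring.
  - have e : g00 * (g10 * i%:~R + g11 * j%:~R) - g10 * (g00 * i%:~R + g01 * j%:~R) = (g00 * g11 - g01 * g10) * j%:~R by ring.
    by rewrite dg' mul1r -c0 -c1 in e; rewrite -e; ring.
have HL : forall i j : int, (i != 0) || (j != 0) ->
    d <= `|g00 * i%:~R + g01 * j%:~R| \/ d <= `|g10 * i%:~R + g11 * j%:~R|.
  move=> i j ij; have := Delta_le_inv _ _ _ _ Dr (Hlat i j) (nz i j ij).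
  by move/le_supnorm; have [-> ->] := vec2_coord _ g i%:~R j%:~R.
have HA : forall i j : int, (i != 0) || (j != 0) ->
    d <= `|expR s * (g00 * i%:~R + g01 * j%:~R)| \/ d <= `|expR (- s) * (g10 * i%:~R + g11 * j%:~R)|.
  move=> i j ij.
  have an : a_ s *m (g *m vec2 i%:~R j%:~R) != 0.
    apply: contra (nz i j ij) => /eqP aw0.
    have [a0 a1] := a_coord _ s (g *m vec2 i%:~R j%:~R); rewrite aw0 !z0 in a0 a1.
    apply/eqP; apply: cV2_eq0.
    + by move/esym/eqP: a0; rewrite mulf_eq0 gt_eqF ?expR_gt0 //= => /eqP.
    + by move/esym/eqP: a1; rewrite mulf_eq0 gt_eqF ?expR_gt0 //= => /eqP.
  have := Delta_le_inv _ _ _ _ Dr' (ex_intro2 _ _ _ (Hlat i j) erefl) an.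
  move/le_supnorm; have [-> ->] := a_coord _ s (g *m vec2 i%:~R j%:~R).
  by have [-> ->] := vec2_coord _ g i%:~R j%:~R.
have [w [Lw [wn sw]]] := Delta_ge0_short _ _ _ r0 D0.
rewrite -/d in sw.
case: Lw => i0 _ [j0 _ ew].
have ij0 : (i0 != 0) || (j0 != 0).
  apply: contraTT wn; rewrite negb_or !negbK => /andP[/eqP i00 /eqP j00].
  rewrite ?negbK -ew i00 j00; apply/eqP; have [c0 c1] := vec2_coord _ g 0%:~R 0%:~R.
  by apply: cV2_eq0; rewrite ?c0 ?c1 ?mulr0z !mulr0 addr0.
have [c0 c1] := vec2_coord _ g i0%:~R j0%:~R; rewrite ew in c0 c1.
have s1 : `|g00 * i0%:~R + g01 * j0%:~R| * d <= 1.
  rewrite -c0; have : `|w ord0 ord0| <= supnorm w by rewrite /supnorm le_max lexx.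
  have : 0 < d by lra.
  move=> dp h; apply: (le_trans _ (ltW sw)); apply: ler_wpM2r => //; exact: ltW.
have s2 : `|g10 * i0%:~R + g11 * j0%:~R| * d <= 1.
  rewrite -c1; have : `|w i1 ord0| <= supnorm w by rewrite /supnorm le_max lexx orbT.
  have : 0 < d by lra.
  move=> dp h; apply: (le_trans _ (ltW sw)); apply: ler_wpM2r => //; exact: ltW.
have E0 : 0 < E by rewrite /E expR_gt0.
have [sp|sn] := lerP 0 s.
- have eE : E = expR s by rewrite /E ger0_norm.
  apply: (latt _ d E g00 g01 g10 g11 h1 h2 h3 h4 dg' _ i0 j0 ij0 s1 s2).
  move=> i j ij; split; first exact: HL.
  have := HA i j ij; rewrite expRN -eE.
  by rewrite [E^-1 * _]mulrC.
- have eE : E = expR (- s) by rewrite /E ltr0_norm.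
  have eE' : expR s = E^-1 by rewrite eE -expRN opprK.
  apply: (latt_sw _ d E g00 g01 g10 g11 h1 h2 h3 h4 dg' _ i0 j0 ij0 s1 s2).
  move=> i j ij; split; first by case: (HL i j ij); [right|left].
  have := HA i j ij; rewrite eE' -eE.
  by rewrite [E^-1 * _]mulrC; case; [right|left].
Qed.
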